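(* Fix a substructure collection $\mathcal{H}$. Let $C^V$ be the set of functions (on graphs) that can be expressed by a GSN-v with arbitrary depth and width using structural features from $\mathcal{H}$, and $C^E$ the set of functions that can be expressed by a GSN-e with arbitrary depth and width using structural features from $\mathcal{H}$. Then $C^E\supseteq C^V$, i.e. GSN-e is at least as expressive as GSN-v.
   Context: Graphs are finite, simple, with possible vertex features and edge features $\mathbf{e}_{u,v}$. For a (connected) graph $H$, its vertex orbits $O^V_{H,1},\dots,O^V_{H,d_H}$ are the classes of $\mathcal{V}_H$ under $\mathrm{Aut}(H)$; its edge orbits are the classes of ordered pairs $(u,v)$ with $\{u,v\}\in\mathcal{E}_H$ under $(u,v)\mapsto(g(u),g(v))$, $g\in\mathrm{Aut}(H)$. For a graph $G$: $x^V_{H,i}(v)=|\{G_S\subseteq G: G_S\simeq H,\ v\in\mathcal{V}_{G_S},\ f(v)\in O^V_{H,i}\}|$ and $x^E_{H,i}(u,v)=|\{G_S\subseteq G: G_S\simeq H,\ (u,v)\in\mathcal{E}_{G_S},\ (f(u),f(v))\in O^E_{H,i}\}|$, where $f:G_S\to H$ is any isomorphism. $\mathbf{x}^V_v$ and $\mathbf{x}^E_{u,v}$ are the concatenations over $H\in\mathcal{H}$ and all orbits. A GSN layer: $\mathbf{h}^{t+1}_v=\mathrm{UP}^{t+1}(\mathbf{h}^t_v,\mathbf{m}^{t+1}_v)$; for GSN-v, $\mathbf{m}^{t+1}_v=M^{t+1}(\{\!\{(\mathbf{h}^t_v,\mathbf{h}^t_u,\mathbf{x}^V_v,\mathbf{x}^V_u,\mathbf{e}_{u,v})\}\!\}_{u\in\mathcal{N}(v)})$;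 for GSN-e, $\mathbf{m}^{t+1}_v=M^{t+1}(\{\!\{(\mathbf{h}^t_v,\mathbf{h}^t_u,\mathbf{x}^E_{u,v},\mathbf{e}_{u,v})\}\!\}_{u\in\mathcal{N}(v)})$, where $\mathrm{UP}^{t+1}$ is an arbitrary function and $M^{t+1}$ an arbitrary function on multisets; $\mathbf{h}^0_v$ are input vertex features, and the network output is obtained from the final vertex states (with a readout for graph-level functions). *)

(* Defs.v *)
From HB Require Import structures.
From mathcomp Require Import all_boot all_order all_algebra.
From mathcomp Require Import fingroup perm reals.
From Stdlib Require Import Permutation.

Unset Printing Implicit Defensive.

Import GRing.Theory Num.Theory.
Local Open Scope ring_scope.

Record pattern := Pattern { pk : nat; padj : rel 'I_pk }.
Arguments padj : clear implicits.

Definition pattern_ok (H : pattern) : Prop :=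
  [/\ symmetric (padj H), irreflexive (padj H),
      (0 < pk H)%N & forall a b : 'I_(pk H), connect (padj H) a b].

Definition autH (H : pattern) : {set ({perm 'I_(pk H)})} :=
  [set g : {perm 'I_(pk H)} |
     [forall a, forall b, padj H (g a) (g b) == padj H a b]].

Definition vorbit (H : pattern) (u : 'I_(pk H)) : {set 'I_(pk H)} :=
  [set (g : {perm 'I_(pk H)}) u | g in autH H].

Definition vorbits (H : pattern) : {set {set 'I_(pk H)}} :=
  [set vorbit H u | u : 'I_(pk H)].

Definition eorbit (H : pattern) (p : 'I_(pk H) * 'I_(pk H))
  : {set 'I_(pk H) * 'I_(pk H)} :=
  [set ((g : {perm 'I_(pk H)}) p.1, g p.2) | g in autH H].

Definition eorbits (H : pattern) : {set {set 'I_(pk H) * 'I_(pk H)}} :=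
  [set eorbit H p | p in [set p : 'I_(pk H) * 'I_(pk H) | padj H p.1 p.2]].

Section Graphs.
Variables (R : realType) (d0 de : nat).

Record graph := Graph {
  gn : nat;
  gadj : rel 'I_gn;
  gX : 'I_gn -> 'rV[R]_d0;
  gE : 'I_gn -> 'I_gn -> 'rV[R]_de
}.


End Graphs.
Arguments gn {R d0 de} g.
Arguments gadj {R d0 de} g.
Arguments gX {R d0 de} g.
Arguments gE {R d0 de} g.

Definition simple_graph (R : realType) (d0 de : nat) (G : graph R d0 de) : Prop :=
  symmetric (gadj G) /\ irreflexive (gadj G).
Arguments simple_graph {R d0 de} G.

(* Subgraphs G_S of G (not necessarily induced) and isomorphisms to H. *)
Section Counts.
Variables (n : nat) (adj : rel 'I_n).

Definition is_subgraph (S : {set 'I_n}) (Es : {set 'I_n * 'I_n}) : bool :=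
  [forall a, forall b,
     ((a, b) \in Es) ==> [&& adj a b, a \in S, b \in S & (b, a) \in Es]].

Definition is_iso (H : pattern) (S : {set 'I_n}) (Es : {set 'I_n * 'I_n})
    (f : {ffun 'I_n -> 'I_(pk H)}) : bool :=
  [forall a in S, forall b in S, (f a == f b) ==> (a == b)]
  && (f @: S == [set: 'I_(pk H)])
  && [forall a in S, forall b in S, ((a, b) \in Es) == padj H (f a) (f b)].

(* x^V_{H,O}(v): number of subgraphs G_S ~ H with v in G_S and f(v) in O
   (O ranging over the vertex orbits of H; 0 on non-orbits). *)
Definition xV (H : pattern) (v : 'I_n) (O : {set 'I_(pk H)}) : nat :=
  if O \in vorbits H then
    #|[set SE : {set 'I_n} * {set 'I_n * 'I_n} |
        [&& is_subgraph SE.1 SE.2, v \in SE.1 &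
            [exists f : {ffun 'I_n -> 'I_(pk H)},
                is_iso H SE.1 SE.2 f && (f v \in O)]]]|
  else 0%N.

Definition xE (H : pattern) (u v : 'I_n) (O : {set 'I_(pk H) * 'I_(pk H)})
  : nat :=
  if O \in eorbits H then
    #|[set SE : {set 'I_n} * {set 'I_n * 'I_n} |
        [&& is_subgraph SE.1 SE.2, (u, v) \in SE.2 &
            [exists f : {ffun 'I_n -> 'I_(pk H)},
                is_iso H SE.1 SE.2 f && ((f u, f v) \in O)]]]|
  else 0%N.
End Counts.

(* functions on multisets = functions on lists invariant under permutation *)
Definition multiset_fun (A B : Type) (M : list A -> B) : Prop :=
  forall s1 s2 : list A, Permutation s1 s2 -> M s1 = M s2.

Section GSN.
Variables (R : realType) (J : finType) (Hs : J -> pattern) (d0 de : nat).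

Definition featV := forall j : J, {set 'I_(pk (Hs j))} -> nat.
Definition featE := forall j : J, {set 'I_(pk (Hs j)) * 'I_(pk (Hs j))} -> nat.

Definition xVG (G : graph R d0 de) (v : 'I_(gn G)) : featV :=
  fun j O => @xV (gn G) (gadj G) (Hs j) v O.
Definition xEG (G : graph R d0 de) (u v : 'I_(gn G)) : featE :=
  fun j O => @xE (gn G) (gadj G) (Hs j) u v O.

Definition msgV (d : nat) : Type :=
  ('rV[R]_d * 'rV[R]_d * featV * featV * 'rV[R]_de)%type.
Definition msgE (d : nat) : Type :=
  ('rV[R]_d * 'rV[R]_d * featE * 'rV[R]_de)%type.

Record vlayer (d1 d2 : nat) := VLayer {
  vm : nat;
  vM : list (msgV d1) -> 'rV[R]_vm;
  vM_ms : multiset_fun _ _ vM;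
  vUP : 'rV[R]_d1 -> 'rV[R]_vm -> 'rV[R]_d2 }.

Record elayer (d1 d2 : nat) := ELayer {
  em : nat;
  eM : list (msgE d1) -> 'rV[R]_em;
  eM_ms : multiset_fun _ _ eM;
  eUP : 'rV[R]_d1 -> 'rV[R]_em -> 'rV[R]_d2 }.

Inductive gsnv : nat -> Type :=
| vbase : gsnv d0
| vstep : forall d1 d2 : nat, gsnv d1 -> vlayer d1 d2 -> gsnv d2.

Inductive gsne : nat -> Type :=
| ebase : gsne d0
| estep : forall d1 d2, gsne d1 -> elayer d1 d2 -> gsne d2.

Fixpoint eval_v d (N : gsnv d) (G : graph R d0 de) : 'I_(gn G) -> 'rV[R]_d :=
  match N in gsnv d return 'I_(gn G) -> 'rV[R]_d with
  | vbase => gX G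
  | vstep d1 d2 N' L =>
      let h := eval_v d1 N' G in
      fun v => vUP d1 d2 L (h v)
        (vM d1 d2 L [seq (h v, h u, xVG G v, xVG G u, gE G u v)
               | u <- enum 'I_(gn G) & gadj G v u])
  end.

Fixpoint eval_e d (N : gsne d) (G : graph R d0 de) : 'I_(gn G) -> 'rV[R]_d :=
  match N in gsne d return 'I_(gn G) -> 'rV[R]_d with
  | ebase => gX G
  | estep d1 d2 N' L =>
      let h := eval_e d1 N' G in
      fun v => eUP d1 d2 L (h v)
        (eM d1 d2 L [seq (h v, h u, xEG G u v, gE G u v)
               | u <- enum 'I_(gn G) & gadj G v u])
  end.

Definition vfun (d : nat) := forall G : graph R d0 de, 'I_(gn G) -> 'rV[R]_d.
Definition gfun (m : nat) := graph R d0 de -> 'rV[R]_m.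

Definition CV_vertex d (f : vfun d) : Prop :=
  exists N : gsnv d, forall G, simple_graph G -> forall v, f G v = eval_v d N G v.
Definition CE_vertex d (f : vfun d) : Prop :=
  exists N : gsne d, forall G, simple_graph G -> forall v, f G v = eval_e d N G v.

Definition CV_graph m (f : gfun m) : Prop :=
  exists d (N : gsnv d) (RO : list 'rV[R]_d -> 'rV[R]_m), and (multiset_fun _ _ RO)
    (forall G, simple_graph G ->
       f G = RO [seq eval_v d N G v | v <- enum 'I_(gn G)]).
Definition CE_graph m (f : gfun m) : Prop :=
  exists d (N : gsne d) (RO : list 'rV[R]_d -> 'rV[R]_m), and (multiset_fun _ _ RO)
    (forall G, simple_graph G ->
       f G = RO [seq eval_e d N G v | v <- enum 'I_(gn G)]).
End GSN.

(* Main.v *)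
Require Import Defs.
From mathcomp Require Import all_boot all_algebra reals.
From mathcomp Require Import fingroup perm.
From Stdlib Require Import Permutation.
Import GRing.Theory Num.Theory.
Set Implicit Arguments. Unset Strict Implicit.

Lemma card_sum (T : finType) (P : pred T) : #|[set x | P x]| = \sum_x (P x : nat).
Proof. by rewrite -sum1dep_card big_mkcond; apply: eq_bigr => x _; case: (P x). Qed.

Section Aut.
Variable H : pattern.

Lemma autHP (g : {perm 'I_(pk H)}) :
  reflect (forall a b, padj H (g a) (g b) = padj H a b) (g \in autH H).
Proof.
rewrite inE; apply: (iffP forallP) => [h a b | h a].
  by have /forallP/(_ b)/eqP := h a.
by apply/forallP => b; rewrite h.
Qed.

Lemma autH1 : 1%g \in autH H.
Proof. by apply/autHP => a b; rewrite !perm1. Qed.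

Lemma autHM g h : g \in autH H -> h \in autH H -> (g * h)%g \in autH H.
Proof.
move=> /autHP Hg /autHP Hh; apply/autHP => a b; by rewrite !permM Hh Hg.
Qed.

Lemma autHV g : g \in autH H -> (g^-1)%g \in autH H.
Proof.
move=> /autHP Hg; apply/autHP => a b.
by rewrite -Hg !permKV.
Qed.

Lemma vorbitP w a : reflect (exists2 g, g \in autH H & a = g w) (a \in vorbit H w).
Proof. exact: imsetP. Qed.

Lemma vorbit_self w : w \in vorbit H w.
Proof. by apply/vorbitP; exists 1%g; rewrite ?perm1 // autH1. Qed.

Lemma vorbit_closed w g a : g \in autH H -> a \in vorbit H w -> g a \in vorbit H w.
Proof.
move=> Hg /vorbitP [g' Hg' ->]; apply/vorbitP; exists (g' * g)%g.
  exact: autHM. by rewrite permM.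
Qed.

Lemma eorbitP p q : reflect (exists2 g, g \in autH H & q = (g p.1, g p.2)) (q \in eorbit H p).
Proof. exact: imsetP. Qed.

Lemma eorbit_self p : p \in eorbit H p.
Proof. by apply/eorbitP; exists 1%g; rewrite ?perm1 ?autH1 //; case: p. Qed.

Lemma eorbit_closed p g q : g \in autH H -> q \in eorbit H p -> (g q.1, g q.2) \in eorbit H p.
Proof.
move=> Hg /eorbitP [g' Hg' ->]; apply/eorbitP; exists (g' * g)%g.
  exact: autHM. by rewrite !permM.
Qed.

Lemma eorbit_eq p q : q \in eorbit H p -> eorbit H q = eorbit H p.
Proof.
move=> /eorbitP [g Hg ->]; apply/(setP (eorbit H _) (eorbit H p)) => r; apply/idP/idP.
  move=> /eorbitP [h Hh ->] /=; apply/eorbitP; exists (g * h)%g.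
    exact: autHM. by rewrite !permM.
move=> /eorbitP [h Hh ->] /=; apply/eorbitP; exists (g^-1 * h)%g.
  by apply: autHM => //; apply: autHV.
by rewrite !permM !permK.
Qed.

Definition degH (a : 'I_(pk H)) := #|[set b | padj H b a]|.

Lemma deg_aut g a : g \in autH H -> degH (g a) = degH a.
Proof.
move=> Hg; rewrite /degH.
have -> : [set b | padj H b (g a)] = [set g x | x in [set b | padj H b a]].
  apply/setP => b; rewrite inE; apply/idP/imsetP.
    move=> hb; exists ((g^-1)%g b); last by rewrite permKV.
    by rewrite inE -(autHP _ Hg) permKV.
  by move=> [c]; rewrite inE => hc ->; rewrite (autHP _ Hg).
by rewrite card_imset //; exact: perm_inj.
Qed.

End Aut.

Section Iso.
Variables (n : nat) (adj : rel 'I_n) (H : pattern).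
Implicit Types (S : {set 'I_n}) (Es : {set 'I_n * 'I_n}) (f : {ffun 'I_n -> 'I_(pk H)}).

Lemma iso_inj S Es f : is_iso n H S Es f -> {in S &, injective f}.
Proof.
case/andP => /andP [/forall_inP h _] _ a b aS bS e.
by have /forall_inP/(_ b bS)/implyP/(_ (introT eqP e))/eqP := h a aS.
Qed.

Lemma iso_onto S Es f : is_iso n H S Es f -> forall x, exists2 a, a \in S & f a = x.
Proof.
case/andP => /andP [_ /eqP h] _ x.
have : x \in [set: 'I_(pk H)] by rewrite inE.
by rewrite -h => /imsetP [a aS ->]; exists a.
Qed.

Lemma iso_adj S Es f a b : is_iso n H S Es f -> a \in S -> b \in S ->
  ((a, b) \in Es) = padj H (f a) (f b).
Proof.
by case/andP => _ /forall_inP h aS bS; have /forall_inP/(_ b bS)/eqP := h a aS.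
Qed.

Lemma sub_edge S Es a b : is_subgraph n adj S Es -> (a, b) \in Es ->
  [/\ adj a b, a \in S, b \in S & (b, a) \in Es].
Proof.
by move=> /forallP/(_ a)/forallP/(_ b)/implyP h /h /and4P [].
Qed.

Lemma iso_rel S Es f f' : is_iso n H S Es f -> is_iso n H S Es f' ->
  exists2 g, g \in autH H & {in S, forall a, f' a = g (f a)}.
Proof.
move=> isf isf'.
pose h x := if [pick a in S | f a == x] is Some a then f' a else x.
have hP x : exists2 a, a \in S & (f a = x /\ h x = f' a).
  rewrite /h; case: pickP => [a /andP [aS /eqP fa] | none].
    by exists a.
  have [a aS fa] := iso_onto isf x.
  by have := none a; rewrite aS fa eqxx.
have hinj : injective h.
  move=> x y e; have [a aS [fa ha]] := hP x; have [b bS [fb hb]] := hP y.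
  rewrite -fa -fb; congr (f _); apply: (iso_inj isf') => //.
  by rewrite -ha -hb.
exists (perm hinj).
  apply/autHP => x y; rewrite !permE.
  have [a aS [fa ->]] := hP x; have [b bS [fb ->]] := hP y.
  by rewrite -(iso_adj isf' aS bS) (iso_adj isf aS bS) fa fb.
move=> a aS; rewrite permE.
have [b bS [fb ->]] := hP (f a).
by rewrite (iso_inj isf bS aS fb).
Qed.

Lemma deg_iso S Es f v : is_subgraph n adj S Es -> is_iso n H S Es f -> v \in S ->
  #|[set u | (u, v) \in Es]| = degH (f v).
Proof.
move=> sub isf vS; rewrite /degH.
have -> : [set b | padj H b (f v)] = [set f u | u in [set u | (u, v) \in Es]].
  apply/setP => b; rewrite inE; apply/idP/imsetP.
    have [a aS <-] := iso_onto isf b => hb; exists a => //.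
    by rewrite inE (iso_adj isf aS vS).
  move=> [u]; rewrite inE => hu ->.
  have [_ uS _ _] := sub_edge sub hu.
  by rewrite -(iso_adj isf uS vS).
rewrite card_in_imset //.
move=> a b; rewrite !inE => ha hb; apply: (iso_inj isf).
  by case: (sub_edge sub ha).
by case: (sub_edge sub hb).
Qed.

End Iso.

Section Count.
Variables (n : nat) (adj : rel 'I_n) (H : pattern) (v : 'I_n) (w : 'I_(pk H)).
Let O := vorbit H w.
Implicit Types (S : {set 'I_n}) (Es : {set 'I_n * 'I_n}) (f : {ffun 'I_n -> 'I_(pk H)}).

Lemma existsV S Es f0 : is_iso n H S Es f0 -> v \in S ->
  [exists f, is_iso n H S Es f && (f v \in O)] = (f0 v \in O).
Proof.
move=> isf0 vS; apply/existsP/idP => [[f /andP [isf fv]] | h]; last by exists f0; rewrite isf0.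
have [g Hg e] := iso_rel isf isf0; rewrite e //; exact: vorbit_closed.
Qed.

Lemma existsE S Es f0 u p : is_iso n H S Es f0 -> u \in S -> v \in S ->
  [exists f, is_iso n H S Es f && ((f u, f v) \in eorbit H p)] = ((f0 u, f0 v) \in eorbit H p).
Proof.
move=> isf0 uS vS; apply/existsP/idP => [[f /andP [isf fv]] | h]; last by exists f0; rewrite isf0.
have [g Hg e] := iso_rel isf isf0; rewrite !e //; exact: (eorbit_closed Hg fv).
Qed.

Lemma countA :
  \sum_u #|[set SE : {set 'I_n} * {set 'I_n * 'I_n} |
        [&& is_subgraph n adj SE.1 SE.2, (u, v) \in SE.2 &
            [exists f, is_iso n H SE.1 SE.2 f && (f v \in O)]]]|
  = (#|[set SE : {set 'I_n} * {set 'I_n * 'I_n} |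
        [&& is_subgraph n adj SE.1 SE.2, v \in SE.1 &
            [exists f, is_iso n H SE.1 SE.2 f && (f v \in O)]]]| * degH w)%N.
Proof.
under eq_bigr do rewrite card_sum.
rewrite exchange_big /= card_sum big_distrl /=; apply: eq_bigr => [[S Es]] _ /=.
case: (boolP (is_subgraph n adj S Es)) => sub /=; last by rewrite big1.
case: (boolP [exists f, is_iso n H S Es f && (f v \in O)]) => E /=; last first.
  by rewrite andbF big1 // => u _; rewrite andbF.
rewrite andbT.
case: (boolP (v \in S)) => vS /=.
  rewrite mul1n -card_sum.
  have [f0 /andP [isf0 fv]] := existsP E.
  rewrite (_ : #|_| = degH (f0 v)); last first.
    rewrite -(deg_iso sub isf0 vS); apply: eq_card => u; by rewrite !inE andbT.
  have [g Hg ->] := vorbitP _ _ fv; exact: deg_aut.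
rewrite mul0n big1 // => u _; rewrite andbT.
by case: (boolP ((u, v) \in Es)) => // /(sub_edge sub) [_ _ vS' _]; rewrite vS' in vS.
Qed.

Definition sel (O' : {set 'I_(pk H) * 'I_(pk H)}) := [forall q in O', q.2 \in O].

Lemma countB u :
  #|[set SE : {set 'I_n} * {set 'I_n * 'I_n} |
        [&& is_subgraph n adj SE.1 SE.2, (u, v) \in SE.2 &
            [exists f, is_iso n H SE.1 SE.2 f && (f v \in O)]]]|
  = \sum_(O' | (O' \in eorbits H) && sel O') xE n adj H u v O'.
Proof.
under eq_bigr => O' /andP [HO' _] do rewrite /xE HO' card_sum.
rewrite exchange_big /= card_sum; apply: eq_bigr => [[S Es]] _ /=.
case: (boolP (is_subgraph n adj S Es)) => sub /=; last by rewrite big1.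
case: (boolP ((u, v) \in Es)) => uv /=; last by rewrite big1.
have [_ uS vS _] := sub_edge sub uv.
case: (boolP [exists f, is_iso n H S Es f]) => [/existsP [f0 isf0] | none]; last first.
  rewrite big1; last first.
    move=> O' _; case: existsP => // [[f /andP [isf _]]].
    by move/existsP: none; case; exists f.
  case: existsP => // [[f /andP [isf _]]].
  by move/existsP: none; case; exists f.
rewrite (existsV isf0 vS).
have edge : padj H (f0 u) (f0 v) by rewrite -(iso_adj isf0 uS vS).
set p0 := (f0 u, f0 v).
have p0E : eorbit H p0 \in eorbits H by apply/imsetP; exists p0; rewrite ?inE.
transitivity (\sum_(O' | (O' \in eorbits H) && sel O') (O' == eorbit H p0 : nat)).
  case: (boolP (sel (eorbit H p0))) => s0.
    rewrite (bigD1 (eorbit H p0)) /=; last by rewrite p0E.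
    rewrite eqxx big1 ?addn0.
      by move/forall_inP: s0 => /(_ p0 (eorbit_self p0)) /= ->.
    by move=> O' /andP [_ /negbTE ->].
  rewrite big1.
    case: (boolP (f0 v \in O)) => // fv; case/negP: s0; apply/forall_inP => q /eorbitP [g Hg ->] /=.
    exact: vorbit_closed.
  move=> O' /andP [_ sO']; case: eqP => // e; by move: s0; rewrite -e sO'.
apply: eq_bigr => O' /andP [/imsetP [p _ ->] _].
rewrite (existsE p isf0 uS vS).
congr (nat_of_bool _); apply/idP/idP => [/eqP -> | h]; first exact: eorbit_self.
by rewrite (eorbit_eq h).
Qed.

End Count.

Section Deg0.
Variables (n : nat) (adj : rel 'I_n) (H : pattern) (v : 'I_n) (w : 'I_(pk H)).
Hypothesis Hok : pattern_ok H.

Lemma count_deg0 : degH w = 0%N ->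
  #|[set SE : {set 'I_n} * {set 'I_n * 'I_n} |
        [&& is_subgraph n adj SE.1 SE.2, v \in SE.1 &
            [exists f, is_iso n H SE.1 SE.2 f && (f v \in vorbit H w)]]]| = 1%N.
Proof.
move=> d0; case: Hok => Hsym Hirr _ Hconn.
have allw b : b = w.
  have /connectP [p pth ->] := Hconn w b.
  case: p pth => [|a p] //= /andP [wa _].
  have : a \in [set b | padj H b w] by rewrite inE Hsym.
  by move/cards0_eq: d0 => ->; rewrite inE.
rewrite -(cards1 (([set v], set0) : {set 'I_n} * {set 'I_n * 'I_n})); apply: eq_card => -[S Es]; rewrite !inE /=; apply/idP/eqP.
  case/and3P => sub vS /existsP [f /andP [isf _]].
  have eS : S = [set v].
    apply/setP => a; rewrite inE; apply/idP/eqP => [aS | ->//].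
    exact: (iso_inj isf aS vS (etrans (allw _) (esym (allw _)))).
  have eE : Es = set0.
    apply/setP => [[a b]]; rewrite inE; apply/negP => e.
    have [_ aS bS _] := sub_edge sub e.
    by move: e; rewrite (iso_adj isf aS bS) (allw (f a)) (allw (f b)) Hirr.
  by rewrite eS eE.
case=> -> ->; apply/and3P; split.
- by apply/forallP => a; apply/forallP => b; rewrite inE.
- by rewrite inE.
apply/existsP; exists [ffun _ => w]; rewrite ffunE vorbit_self andbT.
apply/andP; split; [apply/andP; split|].
- by apply/forall_inP => a /set1P ->; apply/forall_inP => b /set1P ->; rewrite !eqxx implybT.
- apply/eqP/setP => x; rewrite inE (allw x); apply/imsetP; exists v; rewrite ?inE ?ffunE //.
by apply/forall_inP => a _; apply/forall_inP => b _; rewrite inE !ffunE Hirr.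
Qed.
End Deg0.

Local Open Scope ring_scope.
Section Coord.
Variables (R : realType) (n : nat) (adj : rel 'I_n) (H : pattern).
Hypothesis Hok : pattern_ok H.
Hypothesis adj_sym : symmetric adj.

Definition dO (O : {set 'I_(pk H)}) : nat :=
  if [pick a in O] is Some a then degH a else 0%N.

Definition w_coord (O : {set 'I_(pk H)}) (xe : {set 'I_(pk H) * 'I_(pk H)} -> nat) : R :=
  if (O \in vorbits H) && (dO O != 0%N) then
    (\sum_(O' | (O' \in eorbits H) && [forall q in O', q.2 \in O]) xe O')%:R / (dO O)%:R
  else 0.

Definition c_coord (O : {set 'I_(pk H)}) : R :=
  if (O \in vorbits H) && (dO O == 0%N) then 1 else 0.

Lemma coord v O :
  c_coord O + \sum_(u | adj v u) w_coord O (fun O' => xE n adj H u v O')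
  = (xV n adj H v O)%:R.
Proof.
rewrite /c_coord /w_coord /xV.
case: (boolP (O \in vorbits H)) => HO /=; last by rewrite big1 ?addr0.
have [w _ eO] := imsetP HO.
have dOw : dO O = degH w.
  rewrite /dO; case: pickP => [a aO | none]; last by have := none w; rewrite eO vorbit_self.
  by move: aO; rewrite eO => /vorbitP [g Hg ->]; apply: deg_aut.
rewrite dOw; case: (boolP (degH w == 0%N)) => /= [/eqP d0 | d0].
  by rewrite big1 ?addr0 // eO count_deg0.
rewrite add0r -mulr_suml -natr_sum.
apply: (mulIf (x := (degH w)%:R)); first by rewrite pnatr_eq0.
rewrite mulfVK ?pnatr_eq0 // -natrM; congr (_%:R).
rewrite eO -countA; subst O.
rewrite [RHS](bigID (fun u => adj v u)) /= [X in (_ + X)%N]big1 ?addn0.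
  by apply: eq_bigr => u _; rewrite countB.
move=> u nuv; apply/eqP; rewrite cards_eq0; apply/eqP/setP => [[S Es]].
rewrite !inE; apply/negP => /and3P [sub uv _].
by have [a _ _ _] := sub_edge sub uv; rewrite adj_sym a in nuv.
Qed.
End Coord.

From Stdlib Require Import FunctionalExtensionality.

Lemma sum_perm (V : nmodType) (A : Type) (F : A -> V) (s1 s2 : list A) :
  Permutation s1 s2 -> \sum_(x <- s1) F x = \sum_(x <- s2) F x.
Proof.
elim => [|x l l' _ IH|x y l|l l' l'' _ IH1 _ IH2].
- by [].
- by rewrite !big_cons IH.
- by rewrite !big_cons addrCA.
- by rewrite IH1 IH2.
Qed.

Section Trans.
Variables (R : realType) (J : finType) (Hs : J -> pattern) (d0 de : nat).
Hypothesis Hok : forall j, pattern_ok (Hs j).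

Definition TT := {j : J & {set 'I_(pk (Hs j))}}.
Definition K := #|{: TT}|.

Definition code (x : featV J Hs) : 'rV[R]_K :=
  \row_i (x (tag (enum_val i)) (tagged (enum_val i)))%:R.
Definition dec (c : 'rV[R]_K) : featV J Hs :=
  fun j O => Num.trunc (c ord0 (enum_rank (Tagged (fun j => {set 'I_(pk (Hs j))}) O : TT))).

Lemma dec_code x : dec (code x) = x.
Proof.
apply: functional_extensionality_dep => j; apply: functional_extensionality => O.
by rewrite /dec /code mxE enum_rankK /= natrK.
Qed.

Definition crow : 'rV[R]_K :=
  \row_i c_coord R (tagged (enum_val i)).
Definition grow (xe : featE J Hs) : 'rV[R]_K :=
  \row_i w_coord R (tagged (enum_val i)) (xe (tag (enum_val i))).

Definition M0 (s : list (msgE R J Hs de d0)) : 'rV[R]_K :=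
  crow + \sum_(x <- s) grow x.1.2.

Lemma M0_ms : multiset_fun _ _ M0.
Proof. by move=> s1 s2 P; rewrite /M0 (sum_perm _ P). Qed.

Definition L0 : elayer R J Hs de d0 (d0 + K) :=
  ELayer R J Hs de d0 (d0 + K) K M0 M0_ms (fun h m => row_mx h m).

Definition conv d1 (m : msgE R J Hs de (d1 + K)) : msgV R J Hs de d1 :=
  (lsubmx m.1.1.1, lsubmx m.1.1.2, dec (rsubmx m.1.1.1), dec (rsubmx m.1.1.2), m.2).

Definition tlayer d1 d2 (L : vlayer R J Hs de d1 d2) : elayer R J Hs de (d1 + K) (d2 + K).
refine (ELayer R J Hs de (d1 + K) (d2 + K) (vm _ _ _ _ _ _ L)
   (fun s => vM _ _ _ _ _ _ L (map (@conv d1) s)) _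
   (fun h m => row_mx (vUP _ _ _ _ _ _ L (lsubmx h) m) (rsubmx h))).
by move=> s1 s2 P; apply: vM_ms; apply: Permutation_map.
Defined.

Fixpoint trans d (N : gsnv R J Hs d0 de d) : gsne R J Hs d0 de (d + K) :=
  match N in gsnv _ _ _ _ _ d return gsne R J Hs d0 de (d + K) with
  | vbase => estep R J Hs d0 de d0 (d0 + K) (ebase R J Hs d0 de) L0
  | vstep d1 d2 N' L => estep R J Hs d0 de (d1 + K) (d2 + K) (trans N') (tlayer L)
  end.

Definition proj d : elayer R J Hs de (d + K) d :=
  ELayer R J Hs de (d + K) d 0 (fun _ => 0) (fun _ _ _ => erefl) (fun h _ => lsubmx h).

Definition full d (N : gsnv R J Hs d0 de d) : gsne R J Hs d0 de d :=
  estep R J Hs d0 de (d + K) d (trans N) (proj d).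

Lemma base_ok (G : graph R d0 de) v : simple_graph G ->
  M0 [seq (gX G v, gX G u, xEG R J Hs d0 de G u v, gE G u v)
       | u <- enum 'I_(gn G) & gadj G v u] = code (xVG R J Hs d0 de G v).
Proof.
case=> Gsym _; apply/rowP => i.
rewrite /M0 !mxE summxE big_map big_filter big_enum_cond /=.
under eq_bigr do rewrite mxE.
set t := enum_val i.
by rewrite (coord R (Hok (tag t)) Gsym).
Qed.


Lemma trans_ok d (N : gsnv R J Hs d0 de d) (G : graph R d0 de) : simple_graph G ->
  eval_e R J Hs d0 de (d + K) (trans N) G
  = fun v => row_mx (eval_v R J Hs d0 de d N G v) (code (xVG R J Hs d0 de G v)).
Proof.
move=> sG; elim: N => [|d1 d2 N IH L].
  by apply: functional_extensionality => v /=; rewrite base_ok.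
apply: functional_extensionality => v /=; rewrite IH /=.
rewrite row_mxKl row_mxKr; congr (row_mx (vUP _ _ _ _ _ _ L _ (vM _ _ _ _ _ _ L _)) _).
rewrite -map_comp; apply: eq_map => u /=.
by rewrite /conv /= !row_mxKl !row_mxKr !dec_code.
Qed.

Lemma full_ok d (N : gsnv R J Hs d0 de d) (G : graph R d0 de) v : simple_graph G ->
  eval_e R J Hs d0 de d (full N) G v = eval_v R J Hs d0 de d N G v.
Proof. by move=> sG; rewrite /full /= (trans_ok N sG) row_mxKl. Qed.

End Trans.

Unset Implicit Arguments.

Theorem theorem3p3 (R : realType) (J : finType) (Hs : J -> pattern)
  (Hok : forall j, pattern_ok (Hs j)) (d0 de : nat) :
  (forall (d : nat) (f : vfun R d0 de d),
     CV_vertex R J Hs d0 de d f -> CE_vertex R J Hs d0 de d f) /\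
  (forall (m : nat) (f : gfun R d0 de m),
     CV_graph R J Hs d0 de m f -> CE_graph R J Hs d0 de m f).
Proof.
split.
  move=> d f [N HN]; exists (full N) => G sG v.
  by rewrite HN // full_ok.
move=> m f [d [N [RO [ROms HN]]]]; exists d, (full N), RO; split => // G sG.
rewrite HN //; congr RO; apply: eq_map => v; by rewrite full_ok.
Qed.
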